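(* (i) $\mathbf{V}_{\mathcal{L}}=\mathbf{LZ}^{\bullet}\circ\mathbf{D}$. (ii) $\mathbf{V}_{\mathcal{R}}=\mathbf{RZ}^{\bullet}\circ\mathbf{D}$.
   Context: An idempotent semiring is an algebra $(S,+,\cdot)$ with $(S,+)$, $(S,\cdot)$ bands and both distributive laws; addition not assumed commutative. Green's relations: $a\,\mathcal{L}^{\bullet}\,b$ iff $ab=a$, $ba=b$; $a\,\mathcal{R}^{\bullet}\,b$ iff $ab=b$, $ba=a$. $\mathbf{V}_{\mathcal{L}}$ (resp. $\mathbf{V}_{\mathcal{R}}$) is the class of idempotent semirings $S$ on which $\mathcal{L}^{\bullet}$ (resp. $\mathcal{R}^{\bullet}$) is the least distributive lattice congruence; equivalently the variety of idempotent semirings satisfying $x\approx xy+x+xy$ (resp. $x\approx yx+x+yx$). $\mathbf{D}$ is the variety of distributive lattices (idempotent semirings satisfying $x+y\approx y+x$, $xy\approx yx$, $x+xy\approx x$); $\mathbf{LZ}^{\bullet}$ (resp. $\mathbf{RZ}^{\bullet}$) is the variety of idempotent semirings satisfying $xy\approx x$ (resp. $xy\approx y$). For classes $\mathbf{V},\mathbf{W}$ of idempotent semirings, the Mal'cev product $\mathbf{V}\circ\mathbf{W}$ is the class of idempotent semirings $S$ admitting a congruence $\rho$ with $S/\rho\in\mathbf{W}$ and every $\rho$-class (a subsemiring) belonging to $\mathbf{V}$. *)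

(* Defs.v *)
Set Implicit Arguments.

(** Idempotent semirings: (S,+) and (S,.) bands, both distributive laws;
    addition NOT assumed commutative. *)
Record IdemSemiring := {
  carrier :> Type;
  add : carrier -> carrier -> carrier;
  mul : carrier -> carrier -> carrier;
  addA : forall x y z, add x (add y z) = add (add x y) z;
  mulA : forall x y z, mul x (mul y z) = mul (mul x y) z;
  addI : forall x, add x x = x;
  mulI : forall x, mul x x = x;
  mulDl : forall x y z, mul (add x y) z = add (mul x z) (mul y z);
  mulDr : forall x y z, mul x (add y z) = add (mul x y) (mul x z)
}.

Arguments add {i} _ _.
Arguments mul {i} _ _.

Definition V_L (S : IdemSemiring) : Prop :=
  forall x y : S, x = add (add (mul x y) x) (mul x y).

Definition V_R (S : IdemSemiring) : Prop :=
  forall x y : S, x = add (add (mul y x) x) (mul y x).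

Definition congruence (S : IdemSemiring) (rho : S -> S -> Prop) : Prop :=
  (forall x, rho x x) /\
  (forall x y, rho x y -> rho y x) /\
  (forall x y z, rho x y -> rho y z -> rho x z) /\
  (forall x y u v, rho x y -> rho u v -> rho (add x u) (add y v)) /\
  (forall x y u v, rho x y -> rho u v -> rho (mul x u) (mul y v)).

(** S/rho belongs to D (distributive lattices): the defining identities of D
    hold in the quotient, i.e. hold modulo rho. *)
Definition quot_in_D (S : IdemSemiring) (rho : S -> S -> Prop) : Prop :=
  (forall x y : S, rho (add x y) (add y x)) /\
  (forall x y : S, rho (mul x y) (mul y x)) /\
  (forall x y : S, rho (add x (mul x y)) x).

(** A subsemiring (given as a subset P of S, with the induced operations)
    belongs to LZ^• (identity xy = x), resp. RZ^• (identity xy = y). *)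
Definition sub_in_LZ (S : IdemSemiring) (P : S -> Prop) : Prop :=
  forall x y : S, P x -> P y -> mul x y = x.

Definition sub_in_RZ (S : IdemSemiring) (P : S -> Prop) : Prop :=
  forall x y : S, P x -> P y -> mul x y = y.

(** Mal'cev product V ∘ W: S admits a congruence rho with S/rho in W and
    every rho-class (a subsemiring) in V. *)
Definition malcev
  (V : forall S : IdemSemiring, (S -> Prop) -> Prop)
  (Wq : forall S : IdemSemiring, (S -> S -> Prop) -> Prop)
  (S : IdemSemiring) : Prop :=
  exists rho : S -> S -> Prop,
    @congruence S rho /\ Wq S rho /\ (forall a : S, V S (fun x => rho a x)).

(* Main.v *)
Require Import Defs.
From Stdlib Require Import Setoid.

Section VL.
Variable S : IdemSemiring.
Hypothesis H : V_L S.
Local Notation "x + y" := (@add S x y).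
Local Notation "x * y" := (@mul S x y).

Lemma l_abs1 x y : x + x * y = x.
Proof. rewrite (H x y) at 1. rewrite <- addA, addI. symmetry; exact (H x y). Qed.
Lemma l_abs2 x y : x * y + x = x.
Proof. rewrite (H x y) at 2. rewrite addA, addA, addI. symmetry; exact (H x y). Qed.
Lemma l_reg x y : x * y * x = x * y.
Proof.
  assert (E : x * y * (x + x * y) = x * y * x + x * y).
  { rewrite mulDr. rewrite (mulI _ (x*y)). reflexivity. }
  rewrite l_abs1 in E. rewrite E. apply l_abs2.
Qed.

Definition Lr (a b : S) : Prop := a * b = a /\ b * a = b.

Lemma Lr_trans a b c : Lr a b -> Lr b c -> Lr a c.
Proof.
  intros [h1 h2] [h3 h4]; split.
  - rewrite <- h1 at 1. rewrite <- mulA, h3. exact h1.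
  - rewrite <- h4 at 1. rewrite <- mulA, h2. exact h4.
Qed.

Lemma Lr_addr a b u : Lr a b -> Lr (a + u) (b + u).
Proof.
  intros [h1 h2]; split; rewrite !mulDl, !mulDr, mulI;
  [rewrite h1 | rewrite h2]; rewrite l_abs1, l_abs2; reflexivity.
Qed.

Lemma Lr_addl a b u : Lr a b -> Lr (u + a) (u + b).
Proof.
  intros [h1 h2]; split; rewrite !mulDl, !mulDr, mulI;
  [rewrite h1 | rewrite h2]; rewrite l_abs1, l_abs2; reflexivity.
Qed.

Lemma Lr_mulr a b u : Lr a b -> Lr (a * u) (b * u).
Proof.
  assert (K : forall a b, a * b = a -> a * u * (b * u) = a * u).
  { clear a b. intros a b h1. rewrite <- h1 at 1.
    replace (a * b * u * (b * u)) with (a * (b * u * b * u)) by (rewrite !mulA; reflexivity).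
    rewrite l_reg, <- mulA, mulI, mulA, h1. reflexivity. }
  intros [h1 h2]; split; apply K; assumption.
Qed.

Lemma Lr_mull a b u : Lr a b -> Lr (u * a) (u * b).
Proof.
  intros [h1 h2]; split.
  - rewrite mulA, l_reg, <- mulA, h1. reflexivity.
  - rewrite mulA, l_reg, <- mulA, h2. reflexivity.
Qed.

Lemma VL_malcev : malcev sub_in_LZ quot_in_D S.
Proof.
  exists Lr. split; [|split].
  - split; [intro x; split; apply mulI|].
    split; [intros x y [h1 h2]; split; assumption|].
    split; [exact Lr_trans|].
    split.
    + intros x y u v h h'. apply Lr_trans with (y + u).
      apply Lr_addr; assumption. apply Lr_addl; assumption.
    + intros x y u v h h'. apply Lr_trans with (y * u).
      apply Lr_mulr; assumption. apply Lr_mull; assumption.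
  - split; [|split].
    + intros x y; split; rewrite mulDl, !mulDr, !mulI;
      rewrite l_abs2, l_abs1; reflexivity.
    + assert (K : forall x y, x * y * (y * x) = x * y).
      { intros x y. rewrite mulA, <- (mulA _ x y y), mulI. apply l_reg. }
      intros x y; split; apply K.
    + intros x y. rewrite l_abs1. split; apply mulI.
  - intros a x y h1 h2. enough (Lr x y) as [p _] by exact p.
    apply Lr_trans with a. destruct h1; split; assumption. exact h2.
Qed.
End VL.

Definition opS (S : IdemSemiring) : IdemSemiring.
Proof.
  refine (@Build_IdemSemiring (carrier S) (@add S) (fun x y => @mul S y x) _ _ _ _ _ _).
  - apply addA.
  - intros; symmetry; apply mulA.
  - apply addI.
  - apply mulI.
  - intros; apply mulDr.
  - intros; apply mulDl.
Defined.

Lemma VR_malcev (S : IdemSemiring) : V_R S -> malcev sub_in_RZ quot_in_D S.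
Proof.
  intro H.
  assert (H' : V_L (opS S)) by (intros x y; exact (H x y)).
  destruct (@VL_malcev (opS S) H') as [rho [[r1 [r2 [r3 [r4 r5]]]] [[q1 [q2 q3]] c]]].
  exists rho. split; [|split].
  - repeat split; try assumption.
    intros x y u v h h'. exact (r5 u v x y h' h).
  - split; [exact q1|]. split.
    + intros x y. exact (q2 y x).
    + intros x y. apply r3 with (add x (mul y x)); [|exact (q3 x y)].
      apply r4; [apply r1|]. exact (q2 y x).
  - intros a x y h1 h2. exact (c a y x h2 h1).
Qed.

Lemma malcev_VL (S : IdemSemiring) : malcev sub_in_LZ quot_in_D S -> V_L S.
Proof.
  intros [rho [[r1 [r2 [r3 [r4 r5]]]] [[q1 [q2 q3]] c]]] x y.
  set (a := add (add (mul x y) x) (mul x y)).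
  assert (ha : rho x a).
  { apply r2. unfold a. apply r3 with (add x (mul x y)); [|apply q3].
    apply r4; [|apply r1]. apply r3 with (add x (mul x y)); [apply q1|apply q3]. }
  assert (E : mul x a = a).
  { unfold a. rewrite !mulDr, mulI, mulA, mulI. reflexivity. }
  rewrite <- E. symmetry. apply (c x); [apply r1|exact ha].
Qed.

Lemma malcev_VR (S : IdemSemiring) : malcev sub_in_RZ quot_in_D S -> V_R S.
Proof.
  intros [rho [[r1 [r2 [r3 [r4 r5]]]] [[q1 [q2 q3]] c]]] x y.
  set (a := add (add (mul y x) x) (mul y x)).
  assert (hb : rho (add x (mul y x)) x).
  { apply r3 with (add x (mul x y)); [|apply q3]. apply r4; [apply r1|apply q2]. }
  assert (ha : rho x a).
  { apply r2. unfold a. apply r3 with (add x (mul y x)); [|exact hb].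
    apply r4; [|apply r1]. apply r3 with (add x (mul y x)); [apply q1|exact hb]. }
  assert (E : mul a x = a).
  { unfold a. rewrite !mulDl, mulI, <- mulA, mulI. reflexivity. }
  rewrite <- E. symmetry. apply (c x); [exact ha|apply r1].
Qed.

Theorem theorem4p1 :
  (forall S : IdemSemiring, V_L S <-> malcev sub_in_LZ quot_in_D S) /\
  (forall S : IdemSemiring, V_R S <-> malcev sub_in_RZ quot_in_D S).
Proof.
  split; intro S; split.
  - apply VL_malcev.
  - apply malcev_VL.
  - apply VR_malcev.
  - apply malcev_VR.
Qed.
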